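(* Let $F$, $G$, $\Pi$ be as in the context. Let $S$ and $S'$ be two attracting (resp. repelling) strips in $\Sigma_A\times I$ with respect to $G$ such that $\Pi(S)=\Pi(S')$. If $B$ and $B'$ are their maximal attractors (resp. maximal repellers), then $\Pi(B)=\Pi(B')$.
   Context: $I=[0,1]$, $R(x)=1-x$. $F(\xi,p)=(\sigma(\xi),f_{\xi_0}(p))$ on $\Sigma_N\times I$, $\Sigma_N=\{1,\ldots,N\}^{\mathbb Z}$, with $f_i$ $C^1$-diffeomorphisms onto their images. $\mathcal I_P$ / $\mathcal I_R$: indices of orientation preserving / reversing $f_i$. $A=(a_{ij})_{i,j=1}^{2N}$ with $a_{ij}=1$ if ($i\in\mathcal I_P$, $j\le N$), or ($i\in\mathcal I_R$, $j>N$), or ($i-N\in\mathcal I_P$, $j>N$), or ($i-N\in\mathcal I_R$, $j\le N$), else $0$; $\Sigma_A$ the $A$-admissible sequences in $\{1,\ldots,2N\}^{\mathbb Z}$ with shift $\sigma_A$; $\pi(\omega)_n=\overline{\omega_n}$ ($\overline i=i$ for $i\le N$, $\overline i=i-N$ otherwise). $G(\omega,x)=(\sigma_A(\omega),g_{\omega_0}(x))$ with $g_i=f_i$, $g_{i+N}=R\circ f_i\circ R$ ($i\in\mathcal I_P$), $g_i=R\circ f_i$, $g_{i+N}=f_i\circ R$ ($i\in\mathcal I_R$). $C=\{\omega\colon\omega_0\le N\}$; $\Pi(\omega,x)=(\pi(\omega),x)$ if $\omega\in C$, $(\pi(\omega),R(x))$ otherwise. Strips $S_{\varphi,\psi}=\{(\omega,x)\colon\varphi(\omega)\le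 x\le\psi(\omega)\}$ for $\varphi<\psi$ pointwise. A strip $S$ is attracting for $G$ if $G(S)\subset\operatorname{int}S$, repelling if $G^{-1}$ is defined on $S$ and $G^{-1}(S)\subset\operatorname{int}S$. Maximal attractor of attracting $S$: $\bigcap_{n\ge0}G^n(S)$; maximal repeller of repelling $S$: $\bigcap_{n\ge0}G^{-n}(S)$. *)

(* Defs.v *)
From HB Require Import structures.
From mathcomp Require Import all_boot all_order all_algebra.
From mathcomp Require Import all_classical all_reals topology normedtype.
Set Implicit Arguments. Unset Strict Implicit. Unset Printing Implicit Defensive.
Import Order.TTheory GRing.Theory Num.Theory.
Import numFieldNormedType.Exports.
Local Open Scope classical_set_scope.
Local Open Scope ring_scope.

Section Skew.
Variable R : realType.

Definition I01 (x : R) : Prop := 0 <= x <= 1.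
Definition refl (x : R) : R := 1 - x.

(* h is a C^1-diffeomorphism of I onto its image h(I), and h(I) ⊆ I:
   one-sided/interior derivative within I exists at every skpt of I, is
   continuous on I and nonvanishing, and h is injective on I. *)
Definition C1_diffeo_into_I (h : R -> R) : Prop :=
  (exists dh : R -> R,
    {within [set x | I01 x], continuous dh} /\
    (forall x, I01 x ->
       (fun y => (h y - h x) / (y - x)) @ within [set y | I01 y /\ y != x] (nbhs x)
         --> dh x) /\
    (forall x, I01 x -> dh x != 0)) /\
  (forall x y, I01 x -> I01 y -> h x = h y -> x = y) /\
  (forall x, I01 x -> I01 (h x)).

Definition or_pres (h : R -> R) : Prop :=
  forall x y, I01 x -> I01 y -> x < y -> h x < h y.
Definition or_rev (h : R -> R) : Prop :=
  forall x y, I01 x -> I01 y -> x < y -> h y < h x.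

Variable N : nat.
Variable f : 'I_N -> R -> R.

(* Alphabet {1,...,2N}: symbol i <= N is (inl i), symbol i+N is (inr i). *)
Definition sym2 := ('I_N + 'I_N)%type.
Definition bar (s : sym2) : 'I_N := match s with inl i => i | inr i => i end.

Definition Aent (s t : sym2) : Prop :=
  match s, t with
  | inl i, inl _ => or_pres (f i)
  | inl i, inr _ => or_rev (f i)
  | inr i, inr _ => or_pres (f i)
  | inr i, inl _ => or_rev (f i)
  end.

Definition SigmaA (w : int -> sym2) : Prop := forall n : int, Aent (w n) (w (n + 1)).

Definition shift {T : Type} (w : int -> T) : int -> T := fun n => w (n + 1).

Definition gmap (s : sym2) : R -> R :=
  match s with
  | inl i => if `[< or_pres (f i) >] then f i else refl \o f i
  | inr i => if `[< or_pres (f i) >] then refl \o f i \o refl else f i \o refl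
  end.

Definition skpt := ((int -> sym2) * R)%type.

Definition X : set skpt := [set p | SigmaA p.1 /\ I01 p.2].

Definition Gmap (p : skpt) : skpt := (shift p.1, gmap (p.1 0) p.2).

Definition piA (w : int -> sym2) : int -> 'I_N := fun n => bar (w n).

Definition Pi (p : skpt) : (int -> 'I_N) * R :=
  match p.1 0 with
  | inl _ => (piA p.1, p.2)
  | inr _ => (piA p.1, refl p.2)
  end.

Definition is_strip (S : set skpt) : Prop :=
  exists phi psi : (int -> sym2) -> R,
    (forall w, SigmaA w -> [/\ I01 (phi w), I01 (psi w) & phi w < psi w]) /\
    S = [set p | X p /\ phi p.1 <= p.2 <= psi p.1].

(* interior in Sigma_A x I (product of the cylinder topology and the
   usual topology of I) *)
Definition interior_X (S : set skpt) : set skpt :=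
  [set p | S p /\ exists (n : nat) (e : R), 0 < e /\
     forall q, X q -> (forall k : int, `|k| <= n%:Z -> q.1 k = p.1 k) ->
        `|q.2 - p.2| < e -> S q].

Definition attracting (S : set skpt) : Prop :=
  is_strip S /\ Gmap @` S `<=` interior_X S.

Definition repelling (S : set skpt) : Prop :=
  is_strip S /\ S `<=` Gmap @` X /\
  [set p | X p /\ S (Gmap p)] `<=` interior_X S.

Definition max_attractor (S : set skpt) : set skpt :=
  [set p | forall n : nat, (iter n Gmap @` S) p].

Definition max_repeller (S : set skpt) : set skpt :=
  [set p | X p /\ forall n : nat, S (iter n Gmap p)].

End Skew.

(* Main.v *)
Require Import Defs.
From HB Require Import structures.
From mathcomp Require Import all_boot all_order all_algebra.
From mathcomp Require Import all_classical all_reals topology normedtype.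
From mathcomp Require Import lra.
Set Implicit Arguments. Unset Strict Implicit. Unset Printing Implicit Defensive.
Import Order.TTheory GRing.Theory Num.Theory.
Local Open Scope classical_set_scope.
Local Open Scope ring_scope.

Section Proofs.
Variable R : realType.
Variable N : nat.
Variable f : 'I_N -> R -> R.

Definition swp (s : sym2 N) : sym2 N :=
  match s with inl i => inr i | inr i => inl i end.

Definition tau (p : skpt R N) : skpt R N := (fun n => swp (p.1 n), refl p.2).

Lemma not_both (h : R -> R) : or_pres h -> or_rev h -> False.
Proof.
move=> hp hr.
have I0 : I01 (0:R) by rewrite /I01 lexx ler01.
have I1 : I01 (1:R) by rewrite /I01 lexx ler01.
have := hp _ _ I0 I1 ltr01; have := hr _ _ I0 I1 ltr01.
by move=> a b; move: (lt_trans a b); rewrite ltxx.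
Qed.

Lemma Aent_fwd s t t' : Aent f s t -> Aent f s t' -> bar t = bar t' -> t = t'.
Proof.
case: s => i; case: t => j; case: t' => k /= H1 H2 /= E; subst => //;
 exfalso; by apply: (not_both H1 H2) || apply: (not_both H2 H1).
Qed.

Lemma Aent_bwd s s' t : Aent f s t -> Aent f s' t -> bar s = bar s' -> s = s'.
Proof.
case: s => i; case: s' => j; case: t => k /= H1 H2 /= E; subst => //;
 exfalso; by apply: (not_both H1 H2) || apply: (not_both H2 H1).
Qed.

Lemma Aent_swp s t : Aent f (swp s) (swp t) = Aent f s t.
Proof. by case: s => i; case: t => j. Qed.

Lemma SigmaA_swp w : SigmaA f w -> SigmaA f (fun n => swp (w n)).
Proof. by move=> H n; rewrite Aent_swp. Qed.

Lemma seq_det w v : SigmaA f w -> SigmaA f v -> (forall n, bar (w n) = bar (v n)) ->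
  w 0 = v 0 -> forall n, w n = v n.
Proof.
move=> Hw Hv Hb H0.
have key : forall k : nat, w k%:Z = v k%:Z /\ w (- k%:Z) = v (- k%:Z).
  elim=> [|k [IH1 IH2]]; first by rewrite oppr0.
  split.
    have -> : (k.+1)%:Z = k%:Z + 1 by rewrite -addn1 PoszD.
    apply: (@Aent_fwd (w k%:Z)); first exact: Hw.
      by rewrite IH1; apply: Hv.
    exact: Hb.
  have E : - (k.+1)%:Z + 1 = - k%:Z.
    by rewrite -addn1 PoszD opprD -addrA addNr addr0.
  apply: (@Aent_bwd _ _ (w (- k%:Z))).
    by rewrite -E; apply: Hw.
    by rewrite IH2 -E; apply: Hv.
  exact: Hb.
case=> k; first by case: (key k).
by rewrite NegzE; case: (key k.+1).
Qed.

Lemma refl_refl (x : R) : refl (refl x) = x.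
Proof. by rewrite /refl opprB addrC subrK. Qed.

Lemma refl_inj (x y : R) : refl x = refl y -> x = y.
Proof. by move=> E; rewrite -(refl_refl x) E refl_refl. Qed.

Lemma I01_refl x : I01 x -> @I01 R (refl x).
Proof. rewrite /I01 /refl => /andP[a b]; apply/andP; split; lra. Qed.

Lemma tau_tau p : tau (tau p) = p.
Proof.
case: p => w x; rewrite /tau /= refl_refl; congr pair.
by apply: boolp.funext => n; case: (w n).
Qed.

Lemma Pi_tau p : Pi (tau p) = Pi p.
Proof.
case: p => w x; rewrite /Pi /tau /=.
have -> : piA (fun n => swp (w n)) = piA w.
  by apply: boolp.funext => n; rewrite /piA; case: (w n).
by case: (w 0) => i /=; rewrite ?refl_refl.
Qed.

Lemma X_tau p : X f p -> X f (tau p).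
Proof. by case=> H1 H2; split; [apply: SigmaA_swp | apply: I01_refl]. Qed.

Lemma Gmap_tau p : Gmap f (tau p) = tau (Gmap f p).
Proof.
case: p => w x; rewrite /Gmap /tau /=; congr pair.
case: (w 0) => i /=; case: ifP => _ /=; rewrite /comp ?refl_refl //.
Qed.

Lemma iter_tau n p : iter n (Gmap f) (tau p) = tau (iter n (Gmap f) p).
Proof. by elim: n => //= n ->; rewrite Gmap_tau. Qed.

Lemma Pi_eq p q : X f p -> X f q -> Pi p = Pi q -> q = p \/ q = tau p.
Proof.
case: p => w x; case: q => v y [Hw Hx] [Hv Hy]; rewrite /Pi /=.
have sameb : piA w = piA v -> forall n, bar (w n) = bar (v n).
  by move=> E n; have := congr1 (fun g => g n) E.
case Ew: (w 0) => [i|i]; case Ev: (v 0) => [j|j] [E1 E2].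
- left; have H := seq_det Hw Hv (sameb E1).
  have ij : i = j by have := sameb E1 0; rewrite Ew Ev.
  rewrite E2; congr pair.
  by apply: boolp.funext => n; symmetry; apply: H; rewrite /= Ew Ev ij.
- right; rewrite /tau /=; congr pair; last by rewrite E2 refl_refl.
  apply: boolp.funext => n; symmetry; apply: (@seq_det (fun m => swp (w m)) v) => //.
  + exact: SigmaA_swp.
  + by move=> m; rewrite -(sameb E1 m); case: (w m).
  + have ij : i = j by have := sameb E1 0; rewrite Ew Ev.
    by rewrite Ew Ev ij.
- right; rewrite /tau /=; congr pair; last by rewrite E2.
  apply: boolp.funext => n; symmetry; apply: (@seq_det (fun m => swp (w m)) v) => //.
  + exact: SigmaA_swp.
  + by move=> m; rewrite -(sameb E1 m); case: (w m).
  + have ij : i = j by have := sameb E1 0; rewrite Ew Ev.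
    by rewrite Ew Ev ij.
- left; have H := seq_det Hw Hv (sameb E1).
  have ij : i = j by have := sameb E1 0; rewrite Ew Ev.
  rewrite (refl_inj E2); congr pair.
  by apply: boolp.funext => n; symmetry; apply: H; rewrite /= Ew Ev ij.
Qed.

Lemma att_dec S : Gmap f @` S `<=` S -> forall j k, (j <= k)%N ->
  iter k (Gmap f) @` S `<=` iter j (Gmap f) @` S.
Proof.
move=> HS j k /subnK <-; elim: (k - j)%N => [|d IH]; first by rewrite add0n.
move=> _ [s Ss <-]; apply: IH; exists (Gmap f s).
  by apply: HS; exists s.
by rewrite addSn iterSr.
Qed.

Lemma att_sub S S' : S `<=` X f -> S' `<=` X f -> Gmap f @` S' `<=` S' ->
  @Pi R N @` S `<=` @Pi R N @` S' ->
  @Pi R N @` max_attractor f S `<=` @Pi R N @` max_attractor f S'.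
Proof.
move=> SX S'X HS' HP _ [p Bp <-].
pose A n q := (iter n (Gmap f) @` S') q.
have step : forall n, A n p \/ A n (tau p).
  move=> n; case: (Bp n) => s Ss Es.
  have [s' S's Es'] : (@Pi R N @` S') (Pi s) by apply: HP; exists s.
  case: (Pi_eq (SX _ Ss) (S'X _ S's) (esym Es')) => E.
    by left; exists s' => //; rewrite E.
  by right; exists s' => //; rewrite E iter_tau Es.
case: (boolp.pselect (forall n, A n p)) => [H|H].
  by exists p.
have [m Hm] : exists m, ~ A m p.
  by apply: boolp.contrapT => K; apply: H => n; apply: boolp.contrapT => K2; apply: K; exists n.
exists (tau p); last exact: Pi_tau.
move=> n; have Am : A m (tau p) by case: (step m).
case: (leqP n m) => nm.
  by apply: (att_dec HS' nm).
case: (step n) => // Anp; exfalso; apply: Hm.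
by apply: (att_dec HS' (ltnW nm)).
Qed.

Hypothesis hf : forall i, C1_diffeo_into_I (f i).

Lemma X_Gmap p : X f p -> X f (Gmap f p).
Proof.
case: p => w x [Hw Hx]; split.
  by move=> n; apply: Hw.
rewrite /Gmap /=; case: (w 0) => i /=; have [_ [_ Hi]] := hf i;
  case: ifP => _ /=; rewrite /comp; by repeat (apply: I01_refl || apply: Hi).
Qed.

Lemma X_iter n p : X f p -> X f (iter n (Gmap f) p).
Proof. by elim: n => //= n IH /IH /X_Gmap. Qed.

Lemma rep_back S' : (forall y, X f y -> S' (Gmap f y) -> S' y) ->
  forall d y, X f y -> S' (iter d (Gmap f) y) -> S' y.
Proof.
move=> HB; elim=> [//|d IH] y Xy; rewrite iterSr => H.
by apply: HB => //; apply: IH => //; apply: X_Gmap.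
Qed.

Lemma rep_sub S S' : S `<=` X f -> S' `<=` X f ->
  (forall y, X f y -> S' (Gmap f y) -> S' y) ->
  @Pi R N @` S `<=` @Pi R N @` S' ->
  @Pi R N @` max_repeller f S `<=` @Pi R N @` max_repeller f S'.
Proof.
move=> SX S'X HB HP _ [p [Xp Bp] <-].
pose A n q := S' (iter n (Gmap f) q).
have dec : forall q j k, X f q -> (j <= k)%N -> A k q -> A j q.
  move=> q j k Xq /subnK <-; rewrite /A iterD => H.
  exact: (rep_back HB (X_iter j Xq) H).
have step : forall n, A n p \/ A n (tau p).
  move=> n; have Ss := Bp n.
  have [s' S's Es'] : (@Pi R N @` S') (Pi (iter n (Gmap f) p)) by apply: HP; exists (iter n (Gmap f) p).
  case: (Pi_eq (SX _ Ss) (S'X _ S's) (esym Es')) => E.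
    by left; rewrite /A -E.
  by right; rewrite /A iter_tau -E.
have Xtp := X_tau Xp.
case: (boolp.pselect (forall n, A n p)) => [H|H].
  by exists p.
have [m Hm] : exists m, ~ A m p.
  by apply: boolp.contrapT => K; apply: H => n; apply: boolp.contrapT => K2; apply: K; exists n.
exists (tau p); last exact: Pi_tau.
split => // n; have Am : A m (tau p) by case: (step m).
case: (leqP n m) => nm.
  exact: (dec _ _ _ Xtp nm Am).
case: (step n) => // Anp; exfalso; apply: Hm.
exact: (dec _ _ _ Xp (ltnW nm) Anp).
Qed.

Lemma strip_X S : is_strip f S -> S `<=` X f.
Proof. by case=> phi [psi [_ ->]] p []. Qed.

End Proofs.

Theorem lemma3p27 (R : realType) (N : nat) (f : 'I_N -> R -> R)
  (hf : forall i, C1_diffeo_into_I (f i)) :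
  (forall S S' : set (skpt R N),
     attracting f S -> attracting f S' -> @Pi R N @` S = @Pi R N @` S' ->
     @Pi R N @` max_attractor f S = @Pi R N @` max_attractor f S') /\
  (forall S S' : set (skpt R N),
     repelling f S -> repelling f S' -> @Pi R N @` S = @Pi R N @` S' ->
     @Pi R N @` max_repeller f S = @Pi R N @` max_repeller f S').
Proof.
split.
  move=> S S' [sS aS] [sS' aS'] E.
  have iS : Gmap f @` S `<=` S by move=> p /aS [].
  have iS' : Gmap f @` S' `<=` S' by move=> p /aS' [].
  apply/seteqP; split.
    by apply: att_sub (strip_X sS) (strip_X sS') iS' _; rewrite E.
  by apply: att_sub (strip_X sS') (strip_X sS) iS _; rewrite -E.
move=> S S' [sS [_ rS]] [sS' [_ rS']] E.
have bS : forall y, X f y -> S (Gmap f y) -> S y by move=> y Xy H; case: (rS y (conj Xy H)).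
have bS' : forall y, X f y -> S' (Gmap f y) -> S' y by move=> y Xy H; case: (rS' y (conj Xy H)).
apply/seteqP; split.
  by apply: (rep_sub hf) (strip_X sS) (strip_X sS') bS' _; rewrite E.
by apply: (rep_sub hf) (strip_X sS') (strip_X sS) bS _; rewrite -E.
Qed.
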